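(* Fix $\zeta\in\mathbb{R}$ and $\delta\in(0,1/6)$. Define \begin{align*} E(\tau,t) =&\; \frac{i \big(\operatorname{Li}_2(e^{2 \pi t})-\operatorname{Li}_2(e^{i \pi \tau +2 \pi t})\big)}{2 \pi \tau} +\frac{\ln(1-e^{2 \pi t})}{2}\\ & +\frac{i \pi \tau}{12} \bigg(\frac{e^{2 \pi t+i \pi \tau}}{e^{2 \pi t+i \pi \tau} - 1}-\frac{e^{2 \pi \zeta }}{e^{2 \pi \zeta}+1}-\frac{e^{2 \pi t}}{e^{2 \pi \zeta }+e^{2 \pi t}}+2\bigg). \end{align*} Then there is a constant $C>0$ such that $|E(b^2,t)|\leq Cb^2$ for all sufficiently small $b>0$ and all $t$ with $\operatorname{Im} t\in(-1/2+\delta,-2\delta)$.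
   Context: Principal branches are used: $\operatorname{Im}\ln z\in(-\pi,\pi]$ and $\operatorname{Li}_2(z)=-\int_0^z\frac{\ln(1-u)}{u}du$ for $z\in\mathbb{C}\setminus[1,\infty)$. *)

(* Defs.v *)
From Stdlib Require Import Reals.
From Coquelicot Require Import Coquelicot.
Open Scope R_scope.

Definition cexp (z : C) : C :=
  (exp (Re z) * cos (Im z), exp (Re z) * sin (Im z)).

(* principal argument, values in (-PI, PI]  (atan2 convention) *)
Definition carg (z : C) : R :=
  let x := Re z in let y := Im z in
  if Rlt_dec 0 x then atan (y / x)
  else if Rlt_dec x 0 then
    (if Rle_dec 0 y then atan (y / x) + PI else atan (y / x) - PI)
  else if Rlt_dec 0 y then PI / 2
  else if Rlt_dec y 0 then - (PI / 2)
  else 0.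

Definition cln (z : C) : C := (ln (Cmod z), carg z).

(* Li_2(z) = - int_0^z ln(1-u)/u du along the segment [0,z]:
   substituting u = s z gives - int_0^1 ln(1 - s z)/s ds; the integrand
   has a removable singularity at s = 0 with value -z. *)
Definition Li2_integrand (z : C) (s : R) : C :=
  if Req_EM_T s 0 then Copp z else Cmult (RtoC (/ s)) (cln (Cminus 1 (Cmult (RtoC s) z))).

Definition Li2 (z : C) : C :=
  Copp (@RInt C_R_CompleteNormedModule (Li2_integrand z) 0 1).

Definition Ci : C := (0, 1).

Definition Eterm (zeta : R) (tau t : C) : C :=
  let q := cexp (Cmult (RtoC (2 * PI)) t) in
  let w := cexp (Cplus (Cmult (Cmult Ci (RtoC PI)) tau) (Cmult (RtoC (2 * PI)) t)) in
  let ez := RtoC (exp (2 * PI * zeta)) in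
  Cplus (Cplus
    (Cdiv (Cmult Ci (Cminus (Li2 q) (Li2 w))) (Cmult (RtoC (2 * PI)) tau))
    (Cdiv (cln (Cminus 1 q)) (RtoC 2)))
    (Cmult (Cdiv (Cmult (Cmult Ci (RtoC PI)) tau) (RtoC 12))
       (Cplus (Cminus (Cminus (Cdiv w (Cminus w 1)) (Cdiv ez (Cplus ez 1)))
                      (Cdiv q (Cplus ez q))) (RtoC 2))).

(* Main.v *)
Require Import Defs.
From Stdlib Require Import Reals Lra Lia Psatz.
From Coquelicot Require Import Coquelicot.
Open Scope R_scope.

Lemma carg_chart1 (P : C) : 0 < fst P -> carg P = atan (snd P / fst P).
Proof.
  intros H. unfold carg, Re, Im; cbv zeta.
  destruct (Rlt_dec 0 (fst P)); [reflexivity | lra].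
Qed.

Lemma carg_chart2 (P : C) : 0 < snd P -> carg P = PI / 2 - atan (fst P / snd P).
Proof.
  intros H. destruct P as [x y]. unfold carg, Re, Im; cbv zeta; simpl in *.
  destruct (Rlt_dec 0 x) as [Hx|Hx].
  - assert (Hq : 0 < x / y) by (apply Rdiv_lt_0_compat; lra).
    rewrite <- (atan_inv _ Hq). f_equal. field. lra.
  - destruct (Rlt_dec x 0) as [Hx'|Hx'].
    + destruct (Rle_dec 0 y) as [_|Hy]; [|lra].
      assert (Hq : 0 < - (x / y)).
      { apply Ropp_0_gt_lt_contravar. apply Rdiv_neg_pos; lra. }
      pose proof (atan_inv _ Hq) as E.
      replace (/ - (x / y)) with (- (y / x)) in E by (field; lra).
      rewrite !atan_opp in E. lra.
    + assert (x = 0) by lra. subst x.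
      destruct (Rlt_dec 0 y); [|lra].
      replace (0 / y) with 0 by (field; lra). rewrite atan_0. lra.
Qed.

Lemma locally_pos (f : R -> R) (x : R) :
  continuity_pt f x -> 0 < f x -> locally x (fun y => 0 < f y).
Proof.
  intros Hc Hp. apply continuity_pt_filterlim in Hc.
  apply Hc. exists (mkposreal _ Hp). intros y Hy.
  change (Rabs (y - f x) < f x) in Hy.
  apply Rabs_lt_between' in Hy. simpl in Hy. lra.
Qed.

Lemma cont_of_derive (f : R -> R) (x l : R) : is_derive f x l -> continuity_pt f x.
Proof.
  intros H. apply continuity_pt_filterlim.
  apply (ex_derive_continuous f). exists l. exact H.
Qed.

Ltac fixder H :=
  match type of H with is_derive ?f ?x ?l =>
    replace (Derive (fun t => f t) x) with l by (symmetry; apply is_derive_unique; exact H)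
  end.

Lemma der_cln_fst (a b : R -> R) (a' b' x : R) :
  is_derive a x a' -> is_derive b x b' -> 0 < a x ^ 2 + b x ^ 2 ->
  is_derive (fun y => fst (cln (a y, b y))) x
    ((a x * a' + b x * b') / (a x ^ 2 + b x ^ 2)).
Proof.
  intros Ha Hb Hp.
  apply (is_derive_ext (fun y => ln (sqrt (a y ^ 2 + b y ^ 2)))).
  { intros; reflexivity. }
  assert (Hp' : 0 < a x * (a x * 1) + b x * (b x * 1)) by (simpl in Hp; lra).
  auto_derive.
  - repeat split; try (eexists; eassumption); try assumption.
    apply sqrt_lt_R0; assumption.
  - fixder Ha. fixder Hb.
    assert (Hs := sqrt_sqrt (a x * (a x * 1) + b x * (b x * 1)) (Rlt_le _ _ Hp')).
    assert (Hs0 := sqrt_lt_R0 _ Hp').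
    set (S := sqrt (a x * (a x * 1) + b x * (b x * 1))) in *.
    simpl. field_simplify_eq. 2: lra.
    replace (S ^ 2) with (S * S) by ring. rewrite Hs. ring.
Qed.

Lemma der_cln_snd (a b : R -> R) (a' b' x : R) :
  is_derive a x a' -> is_derive b x b' -> (0 < a x \/ 0 < b x) ->
  is_derive (fun y => snd (cln (a y, b y))) x
    ((a x * b' - b x * a') / (a x ^ 2 + b x ^ 2)).
Proof.
  intros Ha Hb [H|H].
  - assert (Hl : locally x (fun y => 0 < a y)).
    { apply locally_pos; [eapply cont_of_derive; eauto | exact H]. }
    apply (is_derive_ext_loc (fun y => atan (b y / a y))).
    { destruct Hl as [e He]. exists e. intros y Hy. specialize (He y Hy).
      unfold cln; simpl. rewrite carg_chart1 by (simpl; lra). reflexivity. }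
    auto_derive.
    + repeat split; try (eexists; eassumption); lra.
    + fixder Ha. fixder Hb.
      field. split; [nra|lra].
  - assert (Hl : locally x (fun y => 0 < b y)).
    { apply locally_pos; [eapply cont_of_derive; eauto | exact H]. }
    apply (is_derive_ext_loc (fun y => PI / 2 - atan (a y / b y))).
    { destruct Hl as [e He]. exists e. intros y Hy. specialize (He y Hy).
      unfold cln; simpl. rewrite carg_chart2 by (simpl; lra). reflexivity. }
    auto_derive.
    + repeat split; try (eexists; eassumption); lra.
    + fixder Ha. fixder Hb.
      field. split; [nra|lra].
Qed.
Definition zz (rho u : R) : C := (rho * cos u, rho * sin u).
Definition AA (rho u v : R) : C := (1 - v * (rho * cos u), - (v * (rho * sin u))).
Definition den (rho u v : R) : R := (1 - v * (rho * cos u)) ^ 2 + (v * (rho * sin u)) ^ 2.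
Definition Dfst (rho u v : R) : R := rho * sin u / den rho u v.
Definition Dsnd (rho u v : R) : R := (v * rho ^ 2 - rho * cos u) / den rho u v.
Definition good (P : C) : Prop := 0 < fst P \/ 0 < snd P.

Lemma sc (u : R) : sin u ^ 2 + cos u ^ 2 = 1.
Proof. pose proof (sin2_cos2 u) as H. unfold Rsqr in H. lra. Qed.

Lemma is_derive_eq (f : R -> R) (x l l' : R) : is_derive f x l -> @eq R l l' -> is_derive f x l'.
Proof. intros H ->; exact H. Qed.

Lemma AA_eq rho u v : Cminus 1 (Cmult (RtoC v) (zz rho u)) = AA rho u v.
Proof.
  unfold Cminus, Cmult, Cplus, Copp, RtoC, zz, AA. simpl.
  apply injective_projections; simpl; ring.
Qed.

Lemma LI_fst rho u v : fst (Li2_integrand (zz rho u) v) =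
  if Req_EM_T v 0 then - (rho * cos u) else / v * fst (cln (AA rho u v)).
Proof.
  unfold Li2_integrand. destruct (Req_EM_T v 0).
  - unfold zz, Copp; simpl. reflexivity.
  - rewrite AA_eq. unfold Cmult, RtoC. cbn [fst snd]. ring.
Qed.

Lemma LI_snd rho u v : snd (Li2_integrand (zz rho u) v) =
  if Req_EM_T v 0 then - (rho * sin u) else / v * snd (cln (AA rho u v)).
Proof.
  unfold Li2_integrand. destruct (Req_EM_T v 0).
  - unfold zz, Copp; simpl. reflexivity.
  - rewrite AA_eq. unfold Cmult, RtoC. cbn [fst snd]. ring.
Qed.

Lemma good_den rho u v : good (AA rho u v) -> 0 < den rho u v.
Proof.
  unfold good, AA, den; simpl. intros [H|H].
  - assert (0 <= (v * (rho * sin u)) * (v * (rho * sin u))) by apply Rle_0_sqr.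
    assert (0 < (1 - v * (rho * cos u)) * (1 - v * (rho * cos u))) by (apply Rmult_lt_0_compat; lra).
    lra.
  - assert (0 <= (1 - v * (rho * cos u)) * (1 - v * (rho * cos u))) by apply Rle_0_sqr.
    assert (0 < (- (v * (rho * sin u))) * (- (v * (rho * sin u)))) by (apply Rmult_lt_0_compat; lra).
    lra.
Qed.

Lemma cln_AA0 rho u : cln (AA rho u 0) = (0, 0).
Proof.
  replace (AA rho u 0) with (1, 0) by (unfold AA; apply injective_projections; simpl; ring).
  unfold cln, Cmod. simpl. replace (1 * (1 * 1) + 0 * (0 * 1)) with 1 by ring.
  rewrite sqrt_1, ln_1. rewrite carg_chart1 by (simpl; lra). simpl.
  replace (0 / 1) with 0 by field. rewrite atan_0. reflexivity.
Qed.

Lemma derS_fst rho u v : good (AA rho u v) ->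
  is_derive (fun v => fst (cln (AA rho u v))) v (Dsnd rho u v).
Proof.
  intros Hg. pose proof (good_den _ _ _ Hg) as Hd.
  eapply is_derive_eq.
  - apply (der_cln_fst (fun v => 1 - v * (rho * cos u)) (fun v => - (v * (rho * sin u)))
             (- (rho * cos u)) (- (rho * sin u)) v).
    + auto_derive; [exact I| ring].
    + auto_derive; [exact I| ring].
    + unfold den in Hd. nra.
  - unfold Dsnd. unfold den in *.
    replace ((- (v * (rho * sin u))) ^ 2) with ((v * (rho * sin u)) ^ 2) by ring.
    replace (v * rho ^ 2) with (v * rho ^ 2 * (sin u ^ 2 + cos u ^ 2)) by (rewrite sc; ring).
    field. lra.
Qed.

Lemma derS_snd rho u v : good (AA rho u v) ->
  is_derive (fun v => snd (cln (AA rho u v))) v (- Dfst rho u v).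
Proof.
  intros Hg. pose proof (good_den _ _ _ Hg) as Hd.
  eapply is_derive_eq.
  - apply (der_cln_snd (fun v => 1 - v * (rho * cos u)) (fun v => - (v * (rho * sin u)))
             (- (rho * cos u)) (- (rho * sin u)) v).
    + auto_derive; [exact I| ring].
    + auto_derive; [exact I| ring].
    + exact Hg.
  - unfold Dfst. unfold den in *.
    replace ((- (v * (rho * sin u))) ^ 2) with ((v * (rho * sin u)) ^ 2) by ring.
    field. lra.
Qed.

Lemma derU_fst rho u v : v <> 0 -> good (AA rho u v) ->
  is_derive (fun u => / v * fst (cln (AA rho u v))) u (Dfst rho u v).
Proof.
  intros Hv Hg. pose proof (good_den _ _ _ Hg) as Hd.
  eapply is_derive_eq.
  - apply (is_derive_scal (fun u => fst (cln (AA rho u v)))).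
    apply (der_cln_fst (fun u => 1 - v * (rho * cos u)) (fun u => - (v * (rho * sin u)))
             (v * (rho * sin u)) (- (v * (rho * cos u))) u).
    + auto_derive; [exact I| ring].
    + auto_derive; [exact I| ring].
    + unfold den in Hd. nra.
  - unfold Dfst, den. simpl. unfold mult; simpl. field. split; [|exact Hv]. unfold den in Hd. nra.
Qed.

Lemma derU_snd rho u v : v <> 0 -> good (AA rho u v) ->
  is_derive (fun u => / v * snd (cln (AA rho u v))) u (Dsnd rho u v).
Proof.
  intros Hv Hg. pose proof (good_den _ _ _ Hg) as Hd.
  eapply is_derive_eq.
  - apply (is_derive_scal (fun u => snd (cln (AA rho u v)))).
    apply (der_cln_snd (fun u => 1 - v * (rho * cos u)) (fun u => - (v * (rho * sin u)))
             (v * (rho * sin u)) (- (v * (rho * cos u))) u).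
    + auto_derive; [exact I| ring].
    + auto_derive; [exact I| ring].
    + exact Hg.
  - unfold Dsnd. unfold den in *. change (scal (/ v) ?X) with (/ v * X).
    replace ((- (v * (rho * sin u))) ^ 2) with ((v * (rho * sin u)) ^ 2) by ring.
    replace (v * rho ^ 2) with (v * rho ^ 2 * (sin u ^ 2 + cos u ^ 2)) by (rewrite sc; ring).
    field. split; [lra|exact Hv].
Qed.

Lemma good_AA rho phi s : 0 < rho -> sin phi < 0 -> 0 <= s -> good (AA rho phi s).
Proof.
  intros Hr Hs Hs0. unfold good, AA; simpl.
  destruct (Req_dec s 0) as [->|Hn].
  - left. lra.
  - right. assert (0 < s * rho) by (apply Rmult_lt_0_compat; lra).
    assert (0 < (s * rho) * (- sin phi)) by (apply Rmult_lt_0_compat; lra).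
    nra.
Qed.

Lemma quot_cont (c : R -> R) (l : R) : is_derive c 0 l -> c 0 = 0 ->
  continuity_pt (fun s => if Req_EM_T s 0 then l else / s * c s) 0.
Proof.
  intros Hd H0. apply is_derive_Reals in Hd.
  intros eps Heps. destruct (Hd eps Heps) as [d Hdd].
  exists d. split; [apply cond_pos|]. intros x [[_ Hx0] Hx].
  simpl in *. unfold R_dist in *.
  destruct (Req_EM_T x 0) as [E|E]; [congruence|].
  destruct (Req_EM_T 0 0) as [_|E']; [|congruence].
  specialize (Hdd x E). replace (x - 0) with x in Hx by ring.
  specialize (Hdd Hx). rewrite Rplus_0_l, H0 in Hdd.
  replace ((c x - 0) / x) with (/ x * c x) in Hdd by (field; exact E). exact Hdd.
Qed.

Lemma locally_pos_id (s : R) : 0 < s -> locally s (fun v => 0 < v).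
Proof.
  intros H. apply (locally_pos (fun v => v)); [apply continuity_pt_id | exact H].
Qed.

Lemma cont_LI_fst rho phi s : 0 < rho -> sin phi < 0 -> 0 <= s ->
  continuity_pt (fun v => fst (Li2_integrand (zz rho phi) v)) s.
Proof.
  intros Hr Hp Hs.
  destruct (Req_dec s 0) as [->|Hn].
  - apply (continuity_pt_ext (fun v => if Req_EM_T v 0 then - (rho * cos phi)
                                  else / v * fst (cln (AA rho phi v)))).
    { intros v. rewrite LI_fst. reflexivity. }
    apply quot_cont.
    + eapply is_derive_eq. apply derS_fst. apply good_AA; lra.
      unfold Dsnd, den. field_simplify. reflexivity.
    + rewrite cln_AA0. reflexivity.
  - apply (continuity_pt_ext_loc (fun v => / v * fst (cln (AA rho phi v)))).
    { destruct (locally_pos_id s ltac:(lra)) as [e He]. exists e. intros v Hv.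
      specialize (He v Hv). rewrite LI_fst. destruct (Req_EM_T v 0); [lra|reflexivity]. }
    set (g := fun v => fst (cln (AA rho phi v))).
    assert (Hg : is_derive g s (Dsnd rho phi s)) by (apply derS_fst; apply good_AA; lra).
    change (fun v => / v * fst (cln (AA rho phi v))) with (fun v => / v * g v).
    apply (cont_of_derive _ _ (Derive (fun v => / v * g v) s)).
    apply Derive_correct. auto_derive; repeat split; try lra; eexists; exact Hg.
Qed.

Lemma cont_LI_snd rho phi s : 0 < rho -> sin phi < 0 -> 0 <= s ->
  continuity_pt (fun v => snd (Li2_integrand (zz rho phi) v)) s.
Proof.
  intros Hr Hp Hs.
  destruct (Req_dec s 0) as [->|Hn].
  - apply (continuity_pt_ext (fun v => if Req_EM_T v 0 then - (rho * sin phi)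
                                  else / v * snd (cln (AA rho phi v)))).
    { intros v. rewrite LI_snd. reflexivity. }
    apply quot_cont.
    + eapply is_derive_eq. apply derS_snd. apply good_AA; lra.
      unfold Dfst, den. field_simplify. reflexivity.
    + rewrite cln_AA0. reflexivity.
  - apply (continuity_pt_ext_loc (fun v => / v * snd (cln (AA rho phi v)))).
    { destruct (locally_pos_id s ltac:(lra)) as [e He]. exists e. intros v Hv.
      specialize (He v Hv). rewrite LI_snd. destruct (Req_EM_T v 0); [lra|reflexivity]. }
    set (g := fun v => snd (cln (AA rho phi v))).
    assert (Hg : is_derive g s (- Dfst rho phi s)) by (apply derS_snd; apply good_AA; lra).
    change (fun v => / v * snd (cln (AA rho phi v))) with (fun v => / v * g v).
    apply (cont_of_derive _ _ (Derive (fun v => / v * g v) s)).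
    apply Derive_correct. auto_derive; repeat split; try lra; eexists; exact Hg.
Qed.

Lemma exRInt_LI_fst rho phi : 0 < rho -> sin phi < 0 ->
  ex_RInt (fun v => fst (Li2_integrand (zz rho phi) v)) 0 1.
Proof.
  intros Hr Hp. apply (@ex_RInt_continuous R_CompleteNormedModule). intros s Hs.
  rewrite Rmin_left, Rmax_right in Hs by lra.
  apply continuity_pt_filterlim. apply cont_LI_fst; lra.
Qed.

Lemma exRInt_LI_snd rho phi : 0 < rho -> sin phi < 0 ->
  ex_RInt (fun v => snd (Li2_integrand (zz rho phi) v)) 0 1.
Proof.
  intros Hr Hp. apply (@ex_RInt_continuous R_CompleteNormedModule). intros s Hs.
  rewrite Rmin_left, Rmax_right in Hs by lra.
  apply continuity_pt_filterlim. apply cont_LI_snd; lra.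
Qed.

Lemma RInt_C (f : R -> C) (a b : R) :
  ex_RInt (fun s => fst (f s)) a b -> ex_RInt (fun s => snd (f s)) a b ->
  @RInt C_R_CompleteNormedModule f a b =
  (RInt (fun s => fst (f s)) a b, RInt (fun s => snd (f s)) a b).
Proof.
  intros H1 H2. apply is_RInt_unique.
  apply (is_RInt_fct_extend_pair f a b); apply (@RInt_correct R_CompleteNormedModule); assumption.
Qed.

Ltac c2d :=
  match goal with
  | |- continuity_2d_pt (fun u v => @?f u v + @?g u v) _ _ =>
      apply (continuity_2d_pt_plus f g); c2d
  | |- continuity_2d_pt (fun u v => @?f u v - @?g u v) _ _ =>
      apply (continuity_2d_pt_minus f g); c2d
  | |- continuity_2d_pt (fun u v => @?f u v * @?g u v) _ _ =>
      apply (continuity_2d_pt_mult f g); c2d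
  | |- continuity_2d_pt (fun u v => - @?f u v) _ _ =>
      apply (continuity_2d_pt_opp f); c2d
  | |- continuity_2d_pt (fun u v => (@?f u v) ^ 2) _ _ =>
      apply (continuity_2d_pt_ext (fun u v => f u v * f u v)); [intros; simpl; ring | c2d]
  | |- continuity_2d_pt (fun u v => cos (@?f u v)) _ _ =>
      apply (continuity_1d_2d_pt_comp cos f); [apply continuity_cos | c2d]
  | |- continuity_2d_pt (fun u v => sin (@?f u v)) _ _ =>
      apply (continuity_1d_2d_pt_comp sin f); [apply continuity_sin | c2d]
  | |- continuity_2d_pt (fun u v => u) _ _ => apply continuity_2d_pt_id1
  | |- continuity_2d_pt (fun u v => v) _ _ => apply continuity_2d_pt_id2
  | |- continuity_2d_pt (fun u v => _) _ _ => apply continuity_2d_pt_const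
  | _ => idtac
  end.

Lemma cont_den rho x y : continuity_2d_pt (fun u v => den rho u v) x y.
Proof. unfold den. c2d. Qed.

Lemma cont_Dfst rho x y : 0 < den rho x y -> continuity_2d_pt (fun u v => Dfst rho u v) x y.
Proof.
  intros H. unfold Dfst, Rdiv.
  apply (continuity_2d_pt_mult (fun u v => rho * sin u) (fun u v => / den rho u v)).
  - c2d.
  - apply (continuity_2d_pt_inv (fun u v => den rho u v)); [apply cont_den | lra].
Qed.

Lemma cont_Dsnd rho x y : 0 < den rho x y -> continuity_2d_pt (fun u v => Dsnd rho u v) x y.
Proof.
  intros H. unfold Dsnd, Rdiv.
  apply (continuity_2d_pt_mult (fun u v => v * rho ^ 2 - rho * cos u) (fun u v => / den rho u v)).
  - c2d.
  - apply (continuity_2d_pt_inv (fun u v => den rho u v)); [apply cont_den | lra].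
Qed.

Lemma c2_pos f x y : continuity_2d_pt f x y -> 0 < f x y -> locally_2d (fun u v => 0 < f u v) x y.
Proof.
  intros H Hp. destruct (H (mkposreal _ Hp)) as [d Hd]. exists d. intros u v Hu Hv.
  specialize (Hd u v Hu Hv). apply Rabs_lt_between' in Hd; simpl in Hd; lra.
Qed.

Lemma c2_to_1 f x y : continuity_2d_pt f x y -> continuity_pt (fun v => f x v) y.
Proof.
  intros H. apply continuity_pt_filterlim. intros P [e He].
  destruct (H e) as [d Hd]. exists d. intros v Hv. apply He.
  change (Rabs (f x v - f x y) < e). apply Hd; [|exact Hv].
  replace (x - x) with 0 by ring. rewrite Rabs_R0. apply cond_pos.
Qed.

Lemma locally_good rho x y : good (AA rho x y) -> locally_2d (fun u v => good (AA rho u v)) x y.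
Proof.
  intros [H|H].
  - assert (Hc : continuity_2d_pt (fun u v => 1 - v * (rho * cos u)) x y) by c2d.
    destruct (c2_pos _ _ _ Hc H) as [d Hd]. exists d. intros u v Hu Hv.
    left. exact (Hd u v Hu Hv).
  - assert (Hc : continuity_2d_pt (fun u v => - (v * (rho * sin u))) x y) by c2d.
    destruct (c2_pos _ _ _ Hc H) as [d Hd]. exists d. intros u v Hu Hv.
    right. exact (Hd u v Hu Hv).
Qed.

Lemma derF_fst rho u v : good (AA rho u v) ->
  is_derive (fun u' => fst (Li2_integrand (zz rho u') v)) u (Dfst rho u v).
Proof.
  intros Hg. destruct (Req_dec v 0) as [->|Hv].
  - apply (is_derive_ext (fun u' => - (rho * cos u'))).
    { intros t. rewrite LI_fst. destruct (Req_EM_T 0 0); [reflexivity|congruence]. }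
    auto_derive; [exact I|]. unfold Dfst, den. field_simplify. reflexivity.
  - apply (is_derive_ext (fun u' => / v * fst (cln (AA rho u' v)))).
    { intros t. rewrite LI_fst. destruct (Req_EM_T v 0); [congruence|reflexivity]. }
    apply derU_fst; assumption.
Qed.

Lemma derF_snd rho u v : good (AA rho u v) ->
  is_derive (fun u' => snd (Li2_integrand (zz rho u') v)) u (Dsnd rho u v).
Proof.
  intros Hg. destruct (Req_dec v 0) as [->|Hv].
  - apply (is_derive_ext (fun u' => - (rho * sin u'))).
    { intros t. rewrite LI_snd. destruct (Req_EM_T 0 0); [reflexivity|congruence]. }
    auto_derive; [exact I|]. unfold Dsnd, den. field_simplify. reflexivity.
  - apply (is_derive_ext (fun u' => / v * snd (cln (AA rho u' v)))).
    { intros t. rewrite LI_snd. destruct (Req_EM_T v 0); [congruence|reflexivity]. }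
    apply derU_snd; assumption.
Qed.

Lemma locally_sin_neg phi0 : sin phi0 < 0 -> locally phi0 (fun phi => sin phi < 0).
Proof.
  intros H. destruct (locally_pos (fun phi => - sin phi) phi0) as [e He].
  - apply continuity_pt_opp, continuity_sin.
  - lra.
  - exists e. intros y Hy. specialize (He y Hy). simpl in He. lra.
Qed.

Lemma FTC_R (f df : R -> R) (a b : R) :
  (forall x, Rmin a b <= x <= Rmax a b -> is_derive f x (df x)) ->
  (forall x, Rmin a b <= x <= Rmax a b -> continuity_pt df x) ->
  is_RInt df a b (f b - f a).
Proof.
  intros H1 H2.
  apply (is_RInt_derive (V := R_CompleteNormedModule) f df a b H1).
  intros x Hx. apply continuity_pt_filterlim. apply H2. exact Hx.
Qed.

Lemma R_deriv_fst rho phi0 : 0 < rho -> sin phi0 < 0 ->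
  is_derive (fun phi => RInt (fun s => fst (Li2_integrand (zz rho phi) s)) 0 1) phi0
    (- snd (cln (AA rho phi0 1))).
Proof.
  intros Hr Hp.
  set (F := fun u v => fst (Li2_integrand (zz rho u) v)).
  assert (HD : is_derive (fun phi => RInt (fun s => F phi s) 0 1) phi0
                 (RInt (fun s => Derive (fun u => F u s) phi0) 0 1)).
  { apply is_derive_RInt_param.
    - destruct (locally_sin_neg phi0 Hp) as [e He]. exists e. intros y Hy t Ht.
      rewrite Rmin_left, Rmax_right in Ht by lra.
      eexists. apply derF_fst. apply good_AA; [lra | apply He; exact Hy | lra].
    - intros t Ht. rewrite Rmin_left, Rmax_right in Ht by lra.
      assert (Hg : good (AA rho phi0 t)) by (apply good_AA; lra).
      apply (continuity_2d_pt_ext_loc (fun u v => Dfst rho u v)).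
      + destruct (locally_good _ _ _ Hg) as [d Hd]. exists d. intros u v Hu Hv.
        symmetry. apply is_derive_unique. apply derF_fst. apply Hd; assumption.
      + apply cont_Dfst. apply good_den. exact Hg.
    - destruct (locally_sin_neg phi0 Hp) as [e He]. exists e. intros y Hy.
      apply exRInt_LI_fst; [lra | apply He; exact Hy]. }
  eapply is_derive_eq; [exact HD|].
  rewrite (RInt_ext _ (fun s => Dfst rho phi0 s)).
  2:{ intros t Ht. rewrite Rmin_left, Rmax_right in Ht by lra.
      apply is_derive_unique. apply derF_fst. apply good_AA; lra. }
  apply is_RInt_unique.
  assert (H : is_RInt (fun s => Dfst rho phi0 s) 0 1
            ((fun s => - snd (cln (AA rho phi0 s))) 1 - (fun s => - snd (cln (AA rho phi0 s))) 0)).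
  { apply (FTC_R (fun s => - snd (cln (AA rho phi0 s))) (fun s => Dfst rho phi0 s)).
  - intros t Ht. rewrite Rmin_left, Rmax_right in Ht by lra.
    set (g := fun s => snd (cln (AA rho phi0 s))).
    assert (Hg : is_derive g t (- Dfst rho phi0 t))
      by (apply derS_snd; apply good_AA; lra).
    change (is_derive (fun s => - g s) t (Dfst rho phi0 t)).
    auto_derive. { eexists; exact Hg. } fixder Hg. ring.
  - intros t Ht. rewrite Rmin_left, Rmax_right in Ht by lra.
    apply (c2_to_1 (fun u v => Dfst rho u v)). apply cont_Dfst. apply good_den. apply good_AA; lra. }
  cbv beta in H. rewrite cln_AA0 in H. cbn [fst snd] in H.
  replace (- snd (cln (AA rho phi0 1))) with (- snd (cln (AA rho phi0 1)) - - 0) by ring.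
  exact H.
Qed.

Lemma R_deriv_snd rho phi0 : 0 < rho -> sin phi0 < 0 ->
  is_derive (fun phi => RInt (fun s => snd (Li2_integrand (zz rho phi) s)) 0 1) phi0
    (fst (cln (AA rho phi0 1))).
Proof.
  intros Hr Hp.
  set (F := fun u v => snd (Li2_integrand (zz rho u) v)).
  assert (HD : is_derive (fun phi => RInt (fun s => F phi s) 0 1) phi0
                 (RInt (fun s => Derive (fun u => F u s) phi0) 0 1)).
  { apply is_derive_RInt_param.
    - destruct (locally_sin_neg phi0 Hp) as [e He]. exists e. intros y Hy t Ht.
      rewrite Rmin_left, Rmax_right in Ht by lra.
      eexists. apply derF_snd. apply good_AA; [lra | apply He; exact Hy | lra].
    - intros t Ht. rewrite Rmin_left, Rmax_right in Ht by lra.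
      assert (Hg : good (AA rho phi0 t)) by (apply good_AA; lra).
      apply (continuity_2d_pt_ext_loc (fun u v => Dsnd rho u v)).
      + destruct (locally_good _ _ _ Hg) as [d Hd]. exists d. intros u v Hu Hv.
        symmetry. apply is_derive_unique. apply derF_snd. apply Hd; assumption.
      + apply cont_Dsnd. apply good_den. exact Hg.
    - destruct (locally_sin_neg phi0 Hp) as [e He]. exists e. intros y Hy.
      apply exRInt_LI_snd; [lra | apply He; exact Hy]. }
  eapply is_derive_eq; [exact HD|].
  rewrite (RInt_ext _ (fun s => Dsnd rho phi0 s)).
  2:{ intros t Ht. rewrite Rmin_left, Rmax_right in Ht by lra.
      apply is_derive_unique. apply derF_snd. apply good_AA; lra. }
  apply is_RInt_unique.
  assert (H : is_RInt (fun s => Dsnd rho phi0 s) 0 1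
            ((fun s => fst (cln (AA rho phi0 s))) 1 - (fun s => fst (cln (AA rho phi0 s))) 0)).
  { apply (FTC_R (fun s => fst (cln (AA rho phi0 s))) (fun s => Dsnd rho phi0 s)).
  - intros t Ht. rewrite Rmin_left, Rmax_right in Ht by lra.
    apply derS_fst. apply good_AA; lra.
  - intros t Ht. rewrite Rmin_left, Rmax_right in Ht by lra.
    apply (c2_to_1 (fun u v => Dsnd rho u v)). apply cont_Dsnd. apply good_den. apply good_AA; lra. }
  cbv beta in H. rewrite cln_AA0 in H. cbn [fst snd] in H.
  replace (fst (cln (AA rho phi0 1))) with (fst (cln (AA rho phi0 1)) - 0) by ring.
  exact H.
Qed.

Definition G1 rho x := ((1 - 1 * (rho * cos x)) * (rho * sin x) + (- (1 * (rho * sin x))) * (- (rho * cos x)))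
   / ((1 - 1 * (rho * cos x)) ^ 2 + (- (1 * (rho * sin x))) ^ 2).
Definition G2 rho x := ((1 - 1 * (rho * cos x)) * (- (rho * cos x)) - (- (1 * (rho * sin x))) * (rho * sin x))
   / ((1 - 1 * (rho * cos x)) ^ 2 + (- (1 * (rho * sin x))) ^ 2).

Lemma der_g1 rho x : 0 < rho -> sin x < 0 ->
  is_derive (fun x => fst (cln (AA rho x 1))) x (G1 rho x).
Proof.
  intros Hr Hs.
  assert (Hg : good (AA rho x 1)) by (apply good_AA; lra).
  pose proof (good_den _ _ _ Hg) as Hd. unfold den in Hd.
  apply (der_cln_fst (fun x => 1 - 1 * (rho * cos x)) (fun x => - (1 * (rho * sin x)))
            (rho * sin x) (- (rho * cos x)) x).
  + auto_derive; [exact I| ring].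
  + auto_derive; [exact I| ring].
  + nra.
Qed.

Lemma der_g2 rho x : 0 < rho -> sin x < 0 ->
  is_derive (fun x => snd (cln (AA rho x 1))) x (G2 rho x).
Proof.
  intros Hr Hs.
  assert (Hg : good (AA rho x 1)) by (apply good_AA; lra).
  apply (der_cln_snd (fun x => 1 - 1 * (rho * cos x)) (fun x => - (1 * (rho * sin x)))
            (rho * sin x) (- (rho * cos x)) x).
  + auto_derive; [exact I| ring].
  + auto_derive; [exact I| ring].
  + exact Hg.
Qed.

Lemma div_bound N D s : 0 < D -> 0 < s -> s * Rabs N <= D -> Rabs (N / D) <= / s.
Proof.
  intros HD Hs H. unfold Rdiv. rewrite Rabs_mult, Rabs_inv, (Rabs_pos_eq D) by lra.
  apply (Rmult_le_reg_l s); [lra|].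
  rewrite <- Rmult_assoc. rewrite Rinv_r by lra.
  apply (Rmult_le_reg_r D); [lra|].
  rewrite Rmult_assoc, Rinv_l by lra. lra.
Qed.

Lemma den1_eq rho x : (1 - 1 * (rho * cos x)) ^ 2 + (- (1 * (rho * sin x))) ^ 2
   = (rho - cos x) ^ 2 + sin x ^ 2.
Proof.
  replace ((rho - cos x) ^ 2 + sin x ^ 2) with
    ((rho - cos x) ^ 2 + sin x ^ 2 + (rho ^ 2 - 1) * (sin x ^ 2 + cos x ^ 2 - 1)) by (rewrite sc; ring).
  ring.
Qed.

Lemma G1_bound rho x sg : 0 < rho -> 0 < sg -> sin x <= - sg -> Rabs (G1 rho x) <= / sg.
Proof.
  intros Hr Hsg Hs. unfold G1. rewrite den1_eq.
  set (s := sin x) in *. set (c := cos x) in *.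
  assert (Hs2 : 0 < s ^ 2) by (replace (s ^ 2) with ((- s) * (- s)) by ring; apply Rmult_lt_0_compat; lra).
  assert (Hc2 : 0 <= (rho - c) ^ 2) by apply pow2_ge_0.
  apply div_bound; [lra | lra |].
  replace ((1 - 1 * (rho * c)) * (rho * s) + - (1 * (rho * s)) * - (rho * c)) with (rho * s) by ring.
  rewrite Rabs_mult, (Rabs_pos_eq rho) by lra. rewrite (Rabs_left s) by lra.
  assert (H0 : 0 <= rho * (- s) * (- s - sg)) by (apply Rmult_le_pos; [apply Rmult_le_pos|]; lra).
  assert (H1 : sg * (rho * - s) <= rho * s ^ 2) by nra.
  assert (H2 : rho * s ^ 2 <= (rho - c) ^ 2 + s ^ 2 \/ rho * s ^ 2 <= rho ^ 2 * s ^ 2).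
  { destruct (Rle_dec rho 1); [left | right]; nra. }
  assert (H3 : rho ^ 2 * s ^ 2 <= (rho - c) ^ 2 + s ^ 2).
  {
    pose proof (den1_eq rho x) as E. fold s c in E.
    assert (0 <= (1 - 1 * (rho * c)) ^ 2) by apply pow2_ge_0.
    replace ((- (1 * (rho * s))) ^ 2) with (rho ^ 2 * s ^ 2) in E by ring. lra. }
  destruct H2; nra.
Qed.

Lemma G2_bound rho x sg : 0 < rho -> 0 < sg -> sin x <= - sg -> Rabs (G2 rho x) <= / sg.
Proof.
  intros Hr Hsg Hs. unfold G2.
  replace ((1 - 1 * (rho * cos x)) * - (rho * cos x) - - (1 * (rho * sin x)) * (rho * sin x))
    with (rho * (rho - cos x) + rho ^ 2 * (sin x ^ 2 + cos x ^ 2 - 1)) by ring.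
  rewrite sc. replace (rho * (rho - cos x) + rho ^ 2 * (1 - 1)) with (rho * (rho - cos x)) by ring.
  pose proof (den1_eq rho x) as E.
  rewrite den1_eq.
  set (s := sin x) in *. set (c := cos x) in *.
  assert (Hs2 : 0 < s ^ 2) by (replace (s ^ 2) with ((- s) * (- s)) by ring; apply Rmult_lt_0_compat; lra).
  assert (Hc2 : 0 <= (rho - c) ^ 2) by apply pow2_ge_0.
  apply div_bound; [lra | lra |].
  rewrite Rabs_mult, (Rabs_pos_eq rho) by lra.
  set (m := Rabs (rho - c)).
  assert (Hm : m ^ 2 = (rho - c) ^ 2) by (unfold m; apply pow2_abs).
  assert (H3 : rho ^ 2 * s ^ 2 <= (rho - c) ^ 2 + s ^ 2).
  { assert (0 <= (1 - 1 * (rho * c)) ^ 2) by apply pow2_ge_0.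
    replace ((- (1 * (rho * s))) ^ 2) with (rho ^ 2 * s ^ 2) in E by ring. lra. }
  assert (H4 : sg ^ 2 <= s ^ 2).
  { assert (0 <= (- s - sg) * (- s + sg)) by (apply Rmult_le_pos; lra). nra. }
  assert (H4' : rho ^ 2 * sg ^ 2 <= rho ^ 2 * s ^ 2).
  { apply Rmult_le_compat_l; [apply pow2_ge_0 | exact H4]. }
  assert (H5 : 0 <= (sg * rho - m) ^ 2) by apply pow2_ge_0.
  assert (H6 : 2 * (sg * (rho * m)) <= rho ^ 2 * sg ^ 2 + m ^ 2) by nra.
  lra.
Qed.

Lemma sin_bound c x : 0 < c <= PI / 2 -> - PI + c <= x <= - c -> sin x <= - sin c.
Proof.
  intros Hc Hx. destruct (Rle_dec (- (PI / 2)) x) as [H|H].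
  - assert (sin c <= sin (- x)) by (apply sin_incr_1; lra).
    rewrite sin_neg in H0. lra.
  - assert (sin c <= sin (x + PI)) by (apply sin_incr_1; lra).
    rewrite neg_sin in H0. lra.
Qed.

Definition Rf rho phi := RInt (fun s => fst (Li2_integrand (zz rho phi) s)) 0 1.
Definition Rs rho phi := RInt (fun s => snd (Li2_integrand (zz rho phi) s)) 0 1.

Lemma Li2_zz rho phi : 0 < rho -> sin phi < 0 -> Li2 (zz rho phi) = (- Rf rho phi, - Rs rho phi).
Proof.
  intros Hr Hp. unfold Li2. rewrite RInt_C.
  - unfold Copp. reflexivity.
  - apply exRInt_LI_fst; assumption.
  - apply exRInt_LI_snd; assumption.
Qed.

Lemma Rf_incr rho a b : 0 < rho -> a <= b -> (forall x, a <= x <= b -> sin x < 0) ->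
  is_RInt (fun x => - snd (cln (AA rho x 1))) a b (Rf rho b - Rf rho a).
Proof.
  intros Hr Hab Hs. unfold Rf.
  apply (FTC_R (fun phi => RInt (fun s => fst (Li2_integrand (zz rho phi) s)) 0 1)
               (fun x => - snd (cln (AA rho x 1)))).
  - intros x Hx. rewrite Rmin_left, Rmax_right in Hx by lra.
    apply R_deriv_fst; [lra | apply Hs; exact Hx].
  - intros x Hx. rewrite Rmin_left, Rmax_right in Hx by lra.
    apply continuity_pt_opp. eapply cont_of_derive. apply der_g2; [lra | apply Hs; exact Hx].
Qed.

Lemma Rs_incr rho a b : 0 < rho -> a <= b -> (forall x, a <= x <= b -> sin x < 0) ->
  is_RInt (fun x => fst (cln (AA rho x 1))) a b (Rs rho b - Rs rho a).
Proof.
  intros Hr Hab Hs. unfold Rs.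
  apply (FTC_R (fun phi => RInt (fun s => snd (Li2_integrand (zz rho phi) s)) 0 1)
               (fun x => fst (cln (AA rho x 1)))).
  - intros x Hx. rewrite Rmin_left, Rmax_right in Hx by lra.
    apply R_deriv_snd; [lra | apply Hs; exact Hx].
  - intros x Hx. rewrite Rmin_left, Rmax_right in Hx by lra.
    eapply cont_of_derive. apply der_g1; [lra | apply Hs; exact Hx].
Qed.

Lemma int_dev (f : R -> R) a b I M : a <= b -> is_RInt f a b I ->
  (forall x, a <= x <= b -> Rabs (f x - f a) <= M) ->
  Rabs (I - (b - a) * f a) <= (b - a) * M.
Proof.
  intros Hab HI Hb.
  assert (H2 := is_RInt_minus _ _ _ _ _ _ HI (is_RInt_const a b (f a))).
  change (is_RInt (fun y => f y - f a) a b (I - (b - a) * f a)) in H2.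
  apply (norm_RInt_le_const (fun y => f y - f a) a b); [exact Hab | | exact H2].
  intros x Hx. apply Hb. exact Hx.
Qed.

Lemma mvt_bound (g dg : R -> R) a x M : a <= x ->
  (forall y, a <= y <= x -> is_derive g y (dg y)) ->
  (forall y, a <= y <= x -> Rabs (dg y) <= M) ->
  Rabs (g x - g a) <= M * (x - a).
Proof.
  intros Hax Hd HM.
  destruct (MVT_gen g a x dg) as [c [Hc E]].
  - intros y Hy. rewrite Rmin_left, Rmax_right in Hy by lra. apply Hd. lra.
  - intros y Hy. rewrite Rmin_left, Rmax_right in Hy by lra.
    eapply cont_of_derive. apply Hd. lra.
  - rewrite Rmin_left, Rmax_right in Hc by lra.
    rewrite E, Rabs_mult, (Rabs_pos_eq (x - a)) by lra.
    apply Rmult_le_compat_r; [lra|]. apply HM. exact Hc.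
Qed.

Lemma dev_g1 rho a b sg : 0 < rho -> 0 < sg -> a <= b -> (forall x, a <= x <= b -> sin x <= - sg) ->
  Rabs ((Rs rho b - Rs rho a) - (b - a) * fst (cln (AA rho a 1))) <= (b - a) * ((b - a) / sg).
Proof.
  intros Hr Hsg Hab Hs.
  apply (int_dev (fun x => fst (cln (AA rho x 1)))); [exact Hab | |].
  - apply Rs_incr; [exact Hr | exact Hab |]. intros x Hx. specialize (Hs x Hx). lra.
  - intros x Hx.
    eapply Rle_trans.
    + apply (mvt_bound (fun x => fst (cln (AA rho x 1))) (G1 rho) a x (/ sg)); [lra | |].
      * intros y Hy. apply der_g1; [exact Hr|]. assert (sin y <= - sg) by (apply Hs; lra). lra.
      * intros y Hy. apply G1_bound; [exact Hr | exact Hsg |]. apply Hs; lra.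
    + unfold Rdiv. rewrite Rmult_comm. apply Rmult_le_compat_r; [left; apply Rinv_0_lt_compat; lra | lra].
Qed.

Lemma dev_g2 rho a b sg : 0 < rho -> 0 < sg -> a <= b -> (forall x, a <= x <= b -> sin x <= - sg) ->
  Rabs ((Rf rho b - Rf rho a) - (b - a) * (- snd (cln (AA rho a 1)))) <= (b - a) * ((b - a) / sg).
Proof.
  intros Hr Hsg Hab Hs.
  apply (int_dev (fun x => - snd (cln (AA rho x 1)))); [exact Hab | |].
  - apply Rf_incr; [exact Hr | exact Hab |]. intros x Hx. specialize (Hs x Hx). lra.
  - intros x Hx.
    replace (- snd (cln (AA rho x 1)) - - snd (cln (AA rho a 1)))
      with (- (snd (cln (AA rho x 1)) - snd (cln (AA rho a 1)))) by ring.
    rewrite Rabs_Ropp.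
    eapply Rle_trans.
    + apply (mvt_bound (fun x => snd (cln (AA rho x 1))) (G2 rho) a x (/ sg)); [lra | |].
      * intros y Hy. apply der_g2; [exact Hr|]. assert (sin y <= - sg) by (apply Hs; lra). lra.
      * intros y Hy. apply G2_bound; [exact Hr | exact Hsg |]. apply Hs; lra.
    + unfold Rdiv. rewrite Rmult_comm. apply Rmult_le_compat_r; [left; apply Rinv_0_lt_compat; lra | lra].
Qed.

Lemma Cmod_le_sum (x y : R) : Cmod (x, y) <= Rabs x + Rabs y.
Proof.
  unfold Cmod. cbn [fst snd].
  rewrite <- (sqrt_pow2 (Rabs x + Rabs y)) by (pose proof (Rabs_pos x); pose proof (Rabs_pos y); lra).
  apply sqrt_le_1_alt.
  rewrite <- (pow2_abs x), <- (pow2_abs y).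
  pose proof (Rabs_pos x); pose proof (Rabs_pos y). nra.
Qed.

Lemma Cmod_ge_im (z : C) : Rabs (snd z) <= Cmod z.
Proof.
  unfold Cmod. rewrite <- sqrt_Rsqr_abs. apply sqrt_le_1_alt. unfold Rsqr.
  pose proof (pow2_ge_0 (fst z)). nra.
Qed.

Lemma Cmod_zz rho phi : 0 <= rho -> Cmod (zz rho phi) = rho.
Proof.
  intros H. unfold Cmod, zz. cbn [fst snd].
  replace ((rho * cos phi) ^ 2 + (rho * sin phi) ^ 2) with (rho ^ 2 * (sin phi ^ 2 + cos phi ^ 2)) by ring.
  rewrite sc, Rmult_1_r. apply sqrt_pow2. exact H.
Qed.

Lemma Cmod_minus (x y : C) : Cmod (Cminus x y) <= Cmod x + Cmod y.
Proof.
  unfold Cminus. eapply Rle_trans; [apply Cmod_triangle|]. rewrite Cmod_opp. lra.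
Qed.

Lemma ratio_bound (u v : C) rho sg : 0 < rho -> 0 < sg -> Cmod u = rho -> rho * sg <= Rabs (snd v) ->
  Cmod (Cdiv u v) <= / sg.
Proof.
  intros Hr Hs Hu Hv.
  pose proof (Cmod_ge_im v) as Hm.
  assert (Hpos : 0 < rho * sg) by (apply Rmult_lt_0_compat; lra).
  assert (Hv0 : v <> (0, 0)).
  { intros E. subst v. cbn [snd] in Hv. rewrite Rabs_R0 in Hv. lra. }
  rewrite Cmod_div by exact Hv0. rewrite Hu.
  eapply Rle_trans; [apply Rle_abs|]. apply div_bound; [lra | lra |].
  rewrite Rabs_pos_eq by lra. lra.
Qed.

Lemma AA1_eq rho u : Cminus 1 (zz rho u) = AA rho u 1.
Proof.
  unfold Cminus, Cplus, Copp, RtoC, zz, AA. apply injective_projections; cbn [fst snd]; ring.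
Qed.

Lemma T12_form (A1 A2 B1 B2 : R) (c : C) (b : R) : b <> 0 ->
  Cplus (Cdiv (Cmult Defs.Ci (Cminus (A1, A2) (B1, B2))) (Cmult (RtoC (2 * PI)) (RtoC (b ^ 2))))
        (Cdiv c (RtoC 2)) =
  (- ((A2 - B2) - PI * b ^ 2 * fst c) / (2 * (PI * b ^ 2)),
   ((A1 - B1) - PI * b ^ 2 * (- snd c)) / (2 * (PI * b ^ 2))).
Proof.
  intros Hb. pose proof PI_RGT_0.
  destruct c as [c1 c2].
  assert (Hb2 : b ^ 2 <> 0) by (apply pow_nonzero; exact Hb).
  assert (Hp2 : PI * b ^ 2 <> 0) by (apply Rmult_integral_contrapositive; split; lra).
  unfold Cdiv, Cminus. unfold Cplus, Cmult, Cinv, Copp, RtoC, Defs.Ci.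
  apply injective_projections; cbn [fst snd].
  - replace (2 * PI * b ^ 2 - 0 * 0) with (2 * (PI * b ^ 2)) by ring.
    replace (2 * PI * 0 + 0 * b ^ 2) with 0 by ring. field. lra.
  - replace (2 * PI * b ^ 2 - 0 * 0) with (2 * (PI * b ^ 2)) by ring.
    replace (2 * PI * 0 + 0 * b ^ 2) with 0 by ring. field. lra.
Qed.

Lemma T3_coef (b : R) :
  Cmod (Cdiv (Cmult (Cmult Defs.Ci (RtoC PI)) (RtoC (b ^ 2))) (RtoC 12)) <= PI * b ^ 2 / 12.
Proof.
  pose proof PI_RGT_0.
  replace (Cdiv (Cmult (Cmult Defs.Ci (RtoC PI)) (RtoC (b ^ 2))) (RtoC 12)) with (0, PI * b ^ 2 / 12).
  - eapply Rle_trans; [apply Cmod_le_sum|]. rewrite Rabs_R0, Rabs_pos_eq.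
    + lra.
    + apply Rmult_le_pos; [apply Rmult_le_pos; [lra | apply pow2_ge_0] | lra].
  - unfold Cdiv, Cmult, Cinv, RtoC, Defs.Ci.
    apply injective_projections; cbn [fst snd]; field.
Qed.

Lemma q_eq (t : C) : cexp (Cmult (RtoC (2 * PI)) t) = zz (exp (2 * PI * Re t)) (2 * PI * Im t).
Proof.
  destruct t as [x y]. unfold cexp, zz, Cmult, RtoC, Re, Im. cbn [fst snd].
  replace (2 * PI * x - 0 * y) with (2 * PI * x) by ring.
  replace (2 * PI * y + 0 * x) with (2 * PI * y) by ring. reflexivity.
Qed.

Lemma w_eq (t : C) (b : R) :
  cexp (Cplus (Cmult (Cmult Defs.Ci (RtoC PI)) (RtoC (b ^ 2))) (Cmult (RtoC (2 * PI)) t))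
  = zz (exp (2 * PI * Re t)) (2 * PI * Im t + PI * b ^ 2).
Proof.
  destruct t as [x y]. unfold cexp, zz, Cmult, Cplus, RtoC, Re, Im, Defs.Ci. cbn [fst snd].
  replace ((0 * PI - 1 * 0) * b ^ 2 - (0 * 0 + 1 * PI) * 0 + (2 * PI * x - 0 * y)) with (2 * PI * x) by ring.
  replace ((0 * PI - 1 * 0) * 0 + (0 * 0 + 1 * PI) * b ^ 2 + (2 * PI * y + 0 * x))
    with (2 * PI * y + PI * b ^ 2) by ring. reflexivity.
Qed.

Lemma Cmod_RtoC_div (e : R) : 0 < e -> Cmod (Cdiv (RtoC e) (Cplus (RtoC e) 1)) <= 1.
Proof.
  intros He.
  replace (Cdiv (RtoC e) (Cplus (RtoC e) 1)) with (RtoC (e / (e + 1))).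
  - rewrite Cmod_R. rewrite Rabs_pos_eq.
    + apply (Rmult_le_reg_r (e + 1)); [lra|]. unfold Rdiv. rewrite Rmult_assoc, Rinv_l by lra. lra.
    + apply Rlt_le, Rdiv_lt_0_compat; lra.
  - unfold Cdiv, Cmult, Cinv, Cplus, RtoC. apply injective_projections; cbn [fst snd].
    + replace ((e + 1) ^ 2 + (0 + 0) ^ 2) with ((e + 1) ^ 2) by ring. field. lra.
    + replace ((e + 1) ^ 2 + (0 + 0) ^ 2) with ((e + 1) ^ 2) by ring. field. lra.
Qed.

Theorem lemma4p1 (zeta delta : R) (Hd : 0 < delta < 1 / 6) :
  exists K : R, 0 < K /\
  exists b0 : R, 0 < b0 /\
  forall b : R, 0 < b < b0 ->
  forall t : C, -1/2 + delta < Im t < -2 * delta ->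
  Cmod (Eterm zeta (RtoC (b ^ 2)) t) <= K * b ^ 2.
Proof.
  pose proof PI_RGT_0 as HPI.
  set (sg := sin (2 * PI * delta)).
  assert (Hsg : 0 < sg).
  { unfold sg. apply sin_gt_0; nra. }
  exists (PI / sg + PI / 12 * (2 / sg + 3)). split.
  { assert (0 < PI / sg) by (apply Rdiv_lt_0_compat; lra).
    assert (0 < 2 / sg) by (apply Rdiv_lt_0_compat; lra).
    assert (0 < PI / 12 * (2 / sg + 3)) by (apply Rmult_lt_0_compat; lra). lra. }
  exists (sqrt delta). split; [apply sqrt_lt_R0; lra|].
  intros b Hb t Ht.
  assert (Hb2 : b ^ 2 < delta).
  { assert (b * b < sqrt delta * sqrt delta) by (apply Rmult_le_0_lt_compat; lra).
    rewrite sqrt_sqrt in H by lra. simpl. lra. }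
  assert (Hbpos : 0 < b ^ 2) by (apply pow_lt; lra).
  set (rho := exp (2 * PI * Re t)).
  assert (Hr : 0 < rho) by apply exp_pos.
  set (al := 2 * PI * Im t).
  set (h := PI * b ^ 2).
  assert (Hh : 0 < h) by (apply Rmult_lt_0_compat; lra).
  assert (Hs : forall x, al <= x <= al + h -> sin x <= - sg).
  { intros x Hx. unfold sg. apply sin_bound.
    - split; nra.
    - unfold al, h in Hx. split; nra. }
  assert (Hs' : forall x, al <= x <= al + h -> sin x < 0).
  { intros x Hx. specialize (Hs x Hx). lra. }
  unfold Eterm. cbv zeta.
  rewrite q_eq, w_eq. fold rho. fold al. fold h.
  rewrite (Li2_zz rho al Hr (Hs' al ltac:(lra))).
  rewrite (Li2_zz rho (al + h) Hr (Hs' (al + h) ltac:(lra))).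
  rewrite AA1_eq.
  rewrite T12_form by lra. fold h.
  eapply Rle_trans; [apply Cmod_triangle|].
  set (c := cln (AA rho al 1)).
  assert (B1 : Cmod (- (- Rs rho al - - Rs rho (al + h) - h * fst c) / (2 * h),
                     (- Rf rho al - - Rf rho (al + h) - h * - snd c) / (2 * h)) <= h / sg).
  { eapply Rle_trans; [apply Cmod_le_sum|].
    pose proof (dev_g1 rho al (al + h) sg Hr Hsg ltac:(lra) Hs) as D1.
    pose proof (dev_g2 rho al (al + h) sg Hr Hsg ltac:(lra) Hs) as D2.
    replace (al + h - al) with h in D1, D2 by ring. fold c in D1, D2.
    replace (- (- Rs rho al - - Rs rho (al + h) - h * fst c) / (2 * h))
      with (- ((Rs rho (al + h) - Rs rho al - h * fst c) / (2 * h))) by (field; lra).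
    replace ((- Rf rho al - - Rf rho (al + h) - h * - snd c) / (2 * h))
      with ((Rf rho (al + h) - Rf rho al - h * - snd c) / (2 * h)) by (field; lra).
    rewrite Rabs_Ropp. unfold Rdiv. rewrite !Rabs_mult.
    rewrite (Rabs_pos_eq (/ (2 * h))) by (left; apply Rinv_0_lt_compat; lra).
    apply (Rmult_le_reg_r (2 * h)); [lra|].
    rewrite Rmult_plus_distr_r, !Rmult_assoc, Rinv_l by lra.
    replace (h * / sg * (2 * h)) with (h * (h * / sg) + h * (h * / sg)) by ring.
    unfold Rdiv in D1, D2. lra. }
  assert (B2 : Cmod (Cplus (Cminus (Cminus (Cdiv (zz rho (al + h)) (Cminus (zz rho (al + h)) 1))
                   (Cdiv (RtoC (exp (2 * PI * zeta))) (Cplus (RtoC (exp (2 * PI * zeta))) 1)))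
                   (Cdiv (zz rho al) (Cplus (RtoC (exp (2 * PI * zeta))) (zz rho al)))) (RtoC 2))
               <= 2 / sg + 3).
  { eapply Rle_trans; [apply Cmod_triangle|].
    eapply Rle_trans; [apply Rplus_le_compat_r, Cmod_minus|].
    eapply Rle_trans; [apply Rplus_le_compat_r, Rplus_le_compat_r, Cmod_minus|].
    assert (W1 : Cmod (Cdiv (zz rho (al + h)) (Cminus (zz rho (al + h)) 1)) <= / sg).
    { apply (ratio_bound _ _ rho); [exact Hr | exact Hsg | apply Cmod_zz; lra |].
      unfold zz, Cminus, Cplus, Copp, RtoC. cbn [fst snd].
      assert (sin (al + h) <= - sg) by (apply Hs; lra).
      rewrite Rabs_left by nra. nra. }
    assert (W3 : Cmod (Cdiv (zz rho al) (Cplus (RtoC (exp (2 * PI * zeta))) (zz rho al))) <= / sg).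
    { apply (ratio_bound _ _ rho); [exact Hr | exact Hsg | apply Cmod_zz; lra |].
      unfold zz, Cplus, RtoC. cbn [fst snd].
      assert (sin al <= - sg) by (apply Hs; lra).
      rewrite Rabs_left by nra. nra. }
    pose proof (Cmod_RtoC_div (exp (2 * PI * zeta)) (exp_pos _)) as W2.
    rewrite Cmod_R, Rabs_pos_eq by lra.
    unfold Rdiv. lra. }
  rewrite Cmod_mult.
  pose proof (T3_coef b) as B3.
  eapply Rle_trans.
  { apply Rplus_le_compat; [exact B1|].
    apply Rmult_le_compat; [apply Cmod_ge_0 | apply Cmod_ge_0 | exact B3 | exact B2]. }
  unfold h. right. field. lra.
Qed.
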